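(* Let $(A_n)_{n\ge1}$ be a sequence of matrices with strictly positive entries (of arbitrary sizes, each dimension at least $2$) such that all products $P_n:=A_n A_{n-1}\cdots A_1$ are defined. Let $\alpha_n\ge1$ satisfy $R(A_n)\le\alpha_n$ for all $n$, put $p_n=\sqrt{\alpha_n}$, and define $q_1=p_1$, $q_{n+1}=\Psi(p_{n+1},q_n)$ where $\Psi(p,q)=\frac{1+pq}{p+q}$. Then $\sqrt{R(P_n)}\le q_n$, i.e. $R(P_n)\le q_n^2$, for every $n\ge1$.
   Context: For a matrix $A=(a_{ik})$ of size $d_1\times d_2$ with strictly positive entries, its distortion is $R(A)=\max_{1\le i,j\le d_1,\ 1\le k,\ell\le d_2}\frac{a_{ik}a_{j\ell}}{a_{i\ell}a_{jk}}$. *)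

(* Defs.v *)
From HB Require Import structures.
From mathcomp Require Import all_boot all_order all_algebra.
Set Implicit Arguments. Unset Strict Implicit. Unset Printing Implicit Defensive.
Import Order.TTheory GRing.Theory Num.Theory.
Local Open Scope ring_scope.

(* The ratio for i=j is 1, so the max is >= 1 > 0 and taking
   the big max with neutral 0 gives exactly the maximum. *)
Definition distortion (R : realFieldType) (m n : nat) (A : 'M[R]_(m, n)) : R :=
  \big[Num.max/0]_(i < m) \big[Num.max/0]_(j < m)
    \big[Num.max/0]_(k < n) \big[Num.max/0]_(l < n)
      ((A i k * A j l) / (A i l * A j k)).

Definition positive_mx (R : realFieldType) (m n : nat) (A : 'M[R]_(m, n)) : Prop :=
  forall i j, 0 < A i j.

Definition Psi (R : realFieldType) (p q : R) : R := (1 + p * q) / (p + q).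

(* Index shift: A k stands for A_{k+1}; it maps R^{d k} to R^{d (k+1)}.
   prodA A k stands for P_{k+1} = A_{k+1} ... A_1. *)
Fixpoint prodA (R : realFieldType) (d : nat -> nat)
  (A : forall k, 'M[R]_(d k.+1, d k)) (k : nat) : 'M[R]_(d k.+1, d 0) :=
  match k with
  | 0 => A 0
  | k'.+1 => A k'.+1 *m prodA A k'
  end.

(* qseq p k stands for q_{k+1}, where p k stands for p_{k+1}. *)
Fixpoint qseq (R : realFieldType) (p : nat -> R) (k : nat) : R :=
  match k with
  | 0 => p 0
  | k'.+1 => Psi (p k'.+1) (qseq p k')
  end.

(* Main.v *)
Require Import Defs.
From HB Require Import structures.
From mathcomp Require Import all_boot all_order all_algebra.
From mathcomp Require Import ring lra.
Import Order.TTheory GRing.Theory Num.Theory.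
Local Open Scope ring_scope.

Lemma bigmax_ge_seq (R : realFieldType) (I : eqType) (r : seq I) (F : I -> R) i :
  i \in r -> F i <= \big[Num.max/0]_(j <- r) F j.
Proof.
elim: r => // h t IH; rewrite in_cons big_cons le_max => /orP [/eqP-> | /IH ->].
  by rewrite lexx.
by rewrite orbT.
Qed.

Lemma bigmax_ge (R : realFieldType) (n : nat) (F : 'I_n -> R) i :
  F i <= \big[Num.max/0]_(j < n) F j.
Proof. exact: bigmax_ge_seq (mem_index_enum i). Qed.

Lemma bigmax_le (R : realFieldType) (n : nat) (F : 'I_n -> R) c :
  0 <= c -> (forall j, F j <= c) -> \big[Num.max/0]_(j < n) F j <= c.
Proof.
move=> c0 H; apply: (big_ind (fun x => x <= c)) => //.
by move=> x y hx hy; rewrite ge_max hx hy.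
Qed.

Lemma ratio_le_dist (R : realFieldType) m n (A : 'M[R]_(m, n)) i j k l :
  A i k * A j l / (A i l * A j k) <= distortion A.
Proof.
rewrite /distortion.
apply: (le_trans _ (@bigmax_ge _ _ _ i)) => /=.
apply: (le_trans _ (@bigmax_ge _ _ _ j)) => /=.
apply: (le_trans _ (@bigmax_ge _ _ _ k)) => /=.
exact: (@bigmax_ge _ _ _ l).
Qed.

Lemma dist_le (R : realFieldType) m n (A : 'M[R]_(m, n)) c :
  0 <= c -> (forall i j k l, A i k * A j l / (A i l * A j k) <= c) ->
  distortion A <= c.
Proof.
move=> c0 H; rewrite /distortion.
apply: bigmax_le => // i; apply: bigmax_le => // j.
apply: bigmax_le => // k; apply: bigmax_le => // l.
Qed.

Lemma pos_mul (R : realFieldType) m n r (A : 'M[R]_(m, n)) (B : 'M[R]_(n, r)) :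
  (0 < n)%N -> positive_mx A -> positive_mx B -> positive_mx (A *m B).
Proof.
move=> n0 hA hB i k; rewrite mxE (bigD1 (Ordinal n0)) //=.
apply: ltr_wpDr; last exact: mulr_gt0.
by apply: sumr_ge0 => t _; apply: mulr_ge0; apply: ltW.
Qed.

Lemma keyineq (R : rcfType) (p q L M W U V S : R) :
  1 <= p -> 1 <= q -> 0 < L -> 0 < M -> 0 < W ->
  L * W <= U -> U <= p ^+ 2 * L * W -> M * W <= V -> V <= q ^+ 2 * M * W ->
  S <= q ^+ 2 * M * U + L * V - L * q ^+ 2 * M * W ->
  S <= p ^+ 2 * L * V + M * U - p ^+ 2 * L * M * W ->
  (p + q) ^+ 2 * (W * S) <= (1 + p * q) ^+ 2 * (V * U).
Proof.
move=> p1 q1 L0 M0 W0 U1 U2 V1 V2 S1 S2.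
have a0 : 0 <= p ^+ 2 - 1 by nra.
have b0 : 0 <= q ^+ 2 - 1 by nra.
have ab0 : 0 <= (p ^+ 2 - 1) * (q ^+ 2 - 1) by apply: mulr_ge0.
have hc : 0 <= (1 + p * q) ^+ 2 * L * W - (p + q) ^+ 2 * L * W.
  have -> : (1 + p * q) ^+ 2 * L * W - (p + q) ^+ 2 * L * W =
    (p ^+ 2 - 1) * (q ^+ 2 - 1) * (L * W) by ring.
  by apply: mulr_ge0 => //; apply: mulr_ge0; apply: ltW.
have hc' : 0 <= (1 + p * q) ^+ 2 * M * W - (p + q) ^+ 2 * M * W.
  have -> : (1 + p * q) ^+ 2 * M * W - (p + q) ^+ 2 * M * W =
    (p ^+ 2 - 1) * (q ^+ 2 - 1) * (M * W) by ring.
  by apply: mulr_ge0 => //; apply: mulr_ge0; apply: ltW.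
have pq0 : 0 <= (p + q) ^+ 2 * W by apply: mulr_ge0; [exact: sqr_ge0 | exact: ltW].
case: (lerP ((p ^+ 2 - 1) * L * (V - M * W)) ((q ^+ 2 - 1) * M * (U - L * W))) => hcase.
- set E2 := (1+p*q)^+2*U*V - (p+q)^+2*W*(p^+2*L*V + M*U - p^+2*L*M*W).
  have E2ge : 0 <= E2.
    have [bz|bpos] := eqVneq (q ^+ 2 - 1) 0.
      have VE : V = M * W.
        apply/eqP; rewrite eq_le V1 andbT; apply: (le_trans V2).
        have -> : q ^+ 2 = 1 by apply/eqP; rewrite -subr_eq0 bz.
        by rewrite mul1r.
      have -> : E2 = M * W * U * ((p ^+ 2 - 1) * (q ^+ 2 - 1)) by rewrite /E2 VE; ring.
      apply: mulr_ge0; last exact: mulr_ge0.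
      apply: mulr_ge0; last nra.
      by apply: mulr_ge0; apply: ltW.
    have bM : 0 < (q ^+ 2 - 1) * M.
      by apply: mulr_gt0 => //; rewrite lt_def bpos b0.
    rewrite -(pmulr_rge0 _ bM).
    have -> : (q ^+ 2 - 1) * M * E2 =
      (p^+2-1)*L*((1+p*q)*(V-M*W) - (q^+2-1)*M*W)^+2 +
      ((q^+2-1)*M*(U-L*W) - (p^+2-1)*L*(V-M*W))*((1+p*q)^+2*V - (p+q)^+2*M*W).
      rewrite /E2; ring.
    apply: addr_ge0.
      apply: mulr_ge0; [apply: mulr_ge0 => //; exact: ltW | exact: sqr_ge0].
    apply: mulr_ge0; first by rewrite subr_ge0.
    rewrite subr_ge0; apply: (le_trans (y := (1+p*q)^+2*M*W)); first by rewrite -subr_ge0.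
    by rewrite -mulrA; apply: ler_wpM2l => //; exact: sqr_ge0.
  have := ler_wpM2l pq0 S2.
  rewrite /E2 in E2ge.
  nra.
- set E1 := (1+p*q)^+2*U*V - (p+q)^+2*W*(q^+2*M*U + L*V - L*q^+2*M*W).
  have E1ge : 0 <= E1.
    have apos : 0 < (p ^+ 2 - 1) * L.
      rewrite lt_def; apply/andP; split; last by apply: mulr_ge0 => //; exact: ltW.
      apply/eqP => az; move: hcase; rewrite az mul0r ltNge.
      move=> /negP; apply; apply: mulr_ge0; first by apply: mulr_ge0 => //; exact: ltW.
      by rewrite subr_ge0.
    rewrite -(pmulr_rge0 _ apos).
    have -> : (p ^+ 2 - 1) * L * E1 =
      (q^+2-1)*M*((1+p*q)*(U-L*W) - (p^+2-1)*L*W)^+2 +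
      ((p^+2-1)*L*(V-M*W) - (q^+2-1)*M*(U-L*W))*((1+p*q)^+2*U - (p+q)^+2*L*W).
      rewrite /E1; ring.
    apply: addr_ge0.
      apply: mulr_ge0; [apply: mulr_ge0 => //; exact: ltW | exact: sqr_ge0].
    apply: mulr_ge0; first by rewrite subr_ge0 ltW.
    rewrite subr_ge0; apply: (le_trans (y := (1+p*q)^+2*L*W)); first by rewrite -subr_ge0.
    by rewrite -mulrA; apply: ler_wpM2l => //; exact: sqr_ge0.
  have := ler_wpM2l pq0 S1.
  rewrite /E1 in E1ge.
  nra.
Qed.

Lemma prod_dist (R : rcfType) m n r (A : 'M[R]_(m, n)) (B : 'M[R]_(n, r)) (p q : R) :
  (0 < n)%N -> positive_mx A -> positive_mx B -> 1 <= p -> 1 <= q ->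
  distortion A <= p ^+ 2 -> distortion B <= q ^+ 2 ->
  distortion (A *m B) <= Psi p q ^+ 2.
Proof.
move=> n0 hA hB p1 q1 dA dB.
have hAB := @pos_mul _ _ _ _ A B n0 hA hB.
apply: dist_le; first exact: sqr_ge0.
move=> i j k l.
rewrite ler_pdivrMr; last by apply: mulr_gt0.
have pq0 : 0 < (p + q) ^+ 2.
  by apply: exprn_gt0; apply: addr_gt0; [exact: lt_le_trans p1 | exact: lt_le_trans q1].
have -> : Psi p q ^+ 2 * ((A *m B) i l * (A *m B) j k) =
   (1 + p * q) ^+ 2 * ((A *m B) i l * (A *m B) j k) / (p + q) ^+ 2.
  rewrite /Psi expr_div_n mulrAC //.
rewrite ler_pdivlMr // mulrC !mxE.
pose x (t : 'I_n) := A j t / A i t.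
pose y (t : 'I_n) := B t l / B t k.
have [m0 _ hm0] := @arg_minP _ R _ (Ordinal n0) xpredT x isT.
have [n1 _ hn1] := @arg_minP _ R _ (Ordinal n0) xpredT y isT.
set L := x m0. set M := y n1.
have L0 : 0 < L by apply: divr_gt0.
have M0 : 0 < M by apply: divr_gt0.
have hxL t : L * A i t <= A j t by rewrite -ler_pdivlMr //; exact: hm0.
have hyM t : M * B t k <= B t l by rewrite -ler_pdivlMr //; exact: hn1.
have hxU t : A j t <= p ^+ 2 * L * A i t.
  rewrite -ler_pdivrMr //.
  have -> : A j t / A i t = (A i m0 * A j t / (A i t * A j m0)) * L.
    rewrite /L /x; field.
    by apply/and3P; split; rewrite gt_eqF.
  apply: ler_wpM2r; first exact: ltW.
  exact: le_trans (@ratio_le_dist _ _ _ A i j m0 t) dA.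
have hyU t : B t l <= q ^+ 2 * M * B t k.
  rewrite -ler_pdivrMr //.
  have -> : B t l / B t k = (B t l * B n1 k / (B t k * B n1 l)) * M.
    rewrite /M /y; field.
    by apply/and3P; split; rewrite gt_eqF.
  apply: ler_wpM2r; first exact: ltW.
  exact: le_trans (@ratio_le_dist _ _ _ B t n1 l k) dB.
apply: (@keyineq _ p q L M) => //.
- by have := hAB i k; rewrite mxE.
- rewrite mulr_sumr; apply: ler_sum => t _; rewrite mulrA.
  by apply: ler_wpM2r; [exact: ltW | exact: hxL].
- rewrite mulr_sumr; apply: ler_sum => t _; rewrite mulrA.
  by apply: ler_wpM2r; [exact: ltW | exact: hxU].
- rewrite mulr_sumr; apply: ler_sum => t _; rewrite mulrCA.
  by apply: ler_wpM2l; [exact: ltW | exact: hyM].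
- rewrite mulr_sumr; apply: ler_sum => t _.
  rewrite (mulrCA _ (A i t)).
  by apply: ler_wpM2l; [exact: ltW | exact: hyU].
- rewrite !mulr_sumr -big_split -sumrB /=.
  apply: ler_sum => t _.
  have h1 : 0 <= A j t - L * A i t by rewrite subr_ge0.
  have h2 : 0 <= q ^+ 2 * M * B t k - B t l by rewrite subr_ge0.
  have := mulr_ge0 h1 h2.
  lra.
- rewrite !mulr_sumr -big_split -sumrB /=.
  apply: ler_sum => t _.
  have h1 : 0 <= p ^+ 2 * L * A i t - A j t by rewrite subr_ge0.
  have h2 : 0 <= B t l - M * B t k by rewrite subr_ge0.
  have := mulr_ge0 h1 h2.
  lra.
Qed.

Lemma Psi_ge1 (R : rcfType) (p q : R) : 1 <= p -> 1 <= q -> 1 <= Psi p q.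
Proof.
move=> p1 q1; rewrite /Psi ler_pdivlMr; last first.
  by apply: addr_gt0; [exact: lt_le_trans p1 | exact: lt_le_trans q1].
rewrite mul1r -subr_ge0.
have -> : 1 + p * q - (p + q) = (p - 1) * (q - 1) by ring.
by apply: mulr_ge0; rewrite subr_ge0.
Qed.

Theorem mainTheorem10 (R : rcfType) (d : nat -> nat)
  (A : forall k, 'M[R]_(d k.+1, d k)) (alpha : nat -> R) :
  (forall k, (2 <= d k)%N) ->
  (forall k, positive_mx (A k)) ->
  (forall k, 1 <= alpha k) ->
  (forall k, distortion (A k) <= alpha k) ->
  forall k,
    Num.sqrt (distortion (prodA A k)) <= qseq (fun i => Num.sqrt (alpha i)) k /\
    distortion (prodA A k) <= (qseq (fun i => Num.sqrt (alpha i)) k) ^+ 2.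
Proof.
move=> hd hpos ha hdist.
have sa1 i : 1 <= Num.sqrt (alpha i).
  by rewrite -sqrtr1 ler_sqrt // (le_trans ler01 (ha i)).
have sa2 i : distortion (A i) <= Num.sqrt (alpha i) ^+ 2.
  by rewrite sqr_sqrtr ?hdist // (le_trans ler01 (ha i)).
have main k : [/\ 1 <= qseq (fun i => Num.sqrt (alpha i)) k,
    positive_mx (prodA A k) &
    distortion (prodA A k) <= (qseq (fun i => Num.sqrt (alpha i)) k) ^+ 2].
  elim: k => [|k [q1 hp hk]] /=; first by split.
  split.
  - exact: Psi_ge1.
  - by apply: pos_mul => //; apply: leq_trans (hd k.+1).
  - apply: prod_dist => //; first by apply: leq_trans (hd k.+1).
move=> k; have [q1 _ hk] := main k.
split => //.
rewrite -(ger0_norm (le_trans ler01 q1)) -sqrtr_sqr ler_sqrt //.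
exact: sqr_ge0.
Qed.
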